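(* Let $M$ be an Orlicz function and let $L_M$ be the Orlicz space either on $(0,1)$ or on $(0,\infty)$. Then $$4\Big\|\bigoplus_{k\geq1}\sigma_{\lambda_k}f_k\Big\|_{L_M}\geq \sum_{k\geq1}\lambda_k\|f_k\|_{L_M}$$ for every sequence $(f_k)_{k\ge1}\subset L_M$ and every sequence $(\lambda_k)_{k\ge1}\subset(0,1)$ with $\sum_{k\ge1}\lambda_k=1$.
   Context: An Orlicz function is an even convex function $M$ on $\mathbb{R}$ with $M(0)=0$; $\|g\|_{L_M}=\inf\{\lambda>0:\int M(|g|/\lambda)\le1\}$. The dilation is $(\sigma_u g)(t)=g(t/u)$ (functions defined only on $(0,1)$ are extended by $0$). $\bigoplus_k g_k$ denotes the disjoint sum of the functions $g_k$, i.e. a measurable function on the underlying interval whose distribution function is $\sum_k m(\{|g_k|>t\})$ (a function equimeasurable with the $g_k$ placed on pairwise disjoint sets). *)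

(* Defs.v *)
From HB Require Import structures.
From mathcomp Require Import all_boot all_order all_algebra.
From mathcomp Require Import all_classical all_reals all_analysis.
Set Implicit Arguments. Unset Strict Implicit. Unset Printing Implicit Defensive.
Import Order.TTheory GRing.Theory Num.Theory.
Local Open Scope classical_set_scope.
Local Open Scope ring_scope.

Definition orlicz_function (R : realType) (M : R -> R) : Prop :=
  [/\ (forall x, M (- x) = M x),
      (forall x y t, 0 <= t <= 1 -> M (t * x + (1 - t) * y) <= t * M x + (1 - t) * M y)
    & M 0 = 0].

(* Luxemburg norm on the domain D (with Lebesgue measure); +oo if no admissible lambda. *)
Definition orlicz_norm (R : realType) (M : R -> R) (D : set R) (g : R -> R) : \bar R :=
  ereal_inf [set l%:E | l in [set l : R | 0 < l /\
     (\int[lebesgue_measure]_(x in D) (M (`|g x| / l))%:E <= 1)%E]].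

Definition in_orlicz (R : realType) (M : R -> R) (D : set R) (g : R -> R) : Prop :=
  measurable_fun D g /\ (orlicz_norm M D g < +oo)%E.

Definition dilation (R : realType) (D : set R) (u : R) (g : R -> R) : R -> R :=
  fun t => if (t / u) \in D then g (t / u) else 0.

Definition distrib (R : realType) (D : set R) (g : R -> R) (t : R) : \bar R :=
  lebesgue_measure (D `&` [set x | t < `|g x|]).

(* Main.v *)
Require Import Defs.
From HB Require Import structures.
From mathcomp Require Import all_boot all_order all_algebra.
From mathcomp Require Import all_classical all_reals all_analysis.
From mathcomp Require Import measurable_realfun.
From mathcomp Require Import ring lra.
Import Order.TTheory GRing.Theory Num.Theory.
Local Open Scope classical_set_scope.
Local Open Scope ring_scope.
Set Implicit Arguments. Unset Strict Implicit.

Section Mfacts.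
Variables (R : realType) (M : R -> R) (HM : orlicz_function M).

Lemma M_ge0 x : 0 <= M x.
Proof.
case: HM => Mev Mc M0.
have := Mc x (- x) (2^-1) ltac:(apply/andP; split; lra).
have -> : 2^-1 * x + (1 - 2^-1) * - x = 0 by lra.
rewrite Mev M0 => h; lra.
Qed.

Lemma M_nd x y : 0 <= x -> x <= y -> M x <= M y.
Proof.
case: HM => Mev Mc M0 x0 xy.
have [y0|y0] := eqVneq y 0.
  by rewrite y0 in xy *; have -> : x = 0 by lra.
have yp : 0 < y by rewrite lt_neqAle eq_sym y0 (le_trans x0 xy).
pose t := (x + y) / (2 * y).
have ht : 0 <= t <= 1.
  apply/andP; split; first by rewrite /t divr_ge0 //; lra.
  by rewrite /t ler_pdivrMr ?mul1r; lra.
have := Mc y (- y) t ht; rewrite Mev.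
have -> : t * y + (1 - t) * - y = x.
  rewrite /t; field; lra.
by move=> h; apply: (le_trans h); lra.
Qed.

Lemma M_scale s x : 0 <= s <= 1 -> M (s * x) <= s * M x.
Proof.
case: HM => Mev Mc M0 hs.
have := Mc x 0 s hs; rewrite M0 !mulr0 !addr0 //.
Qed.

Definition Mp (r : R) := M (Num.max r 0).

Lemma Mp_nd : nondecreasing_fun Mp.
Proof.
move=> a b ab; rewrite /Mp; apply: M_nd; first by rewrite le_max lexx orbT.
by rewrite ge_max !le_max ab lexx /= orbT.
Qed.

Lemma measurable_Mp d (T : measurableType d) (D : set T) (mD : measurable D) (h : T -> R) (l : R) :
  0 < l -> measurable_fun D h -> measurable_fun D (fun x => (M (`|h x| / l))%:E).
Proof.
move=> l0 mh.
have -> : (fun x => (M (`|h x| / l))%:E) = (fun x => (Mp (`|h x| / l))%:E) :> (T -> \bar R).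
  apply/funext => x; rewrite /Mp max_l //.
  by rewrite divr_ge0 // ltW.
apply/measurable_EFinP.
have mMp : measurable_fun setT Mp by exact: nondecreasing_measurable Mp_nd.
have mg : measurable_fun D (fun x => `|h x| / l).
  apply: measurable_funM => //.
  by apply: (measurableT_comp (f := @Num.norm _ R)) => //; exact: normr_measurable.
exact: (measurableT_comp mMp mg).
Qed.
End Mfacts.

Section scale.
Variable R : realType.
Local Notation mu := (@lebesgue_measure R).

Lemma leb_scale (c : R) (A : set R) : 0 < c -> measurable A ->
  mu ((fun x => x / c) @^-1` A) = (c%:E * mu A)%E.
Proof.
move=> c0 mA.
have mh : measurable_fun [set: measurableTypeR R] ((fun x : R => x / c) : measurableTypeR R -> measurableTypeR R).
  by apply: measurable_funM => //.
have ic : 0 <= c^-1 by rewrite invr_ge0 ltW.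
pose pf := measure_function_pushforward__canonical__measure_function_Measure mu mh.
pose sc := measure_function_mscale__canonical__measure_function_Measure (NngNum ic) pf.
have := @lebesgue_measure_unique R sc.
move=> /(_ _ A mA) /= H.
have E : mu A = (c^-1%:E * mu ((fun x : R => (x / c)%R) @^-1` A))%E.
  apply: H => _ [[a b] _ <-].
  rewrite /mscale /= /pushforward.
  have -> : ((fun x => x / c) @^-1` `]a, b]%classic) = `](a * c), (b * c)]%classic.
    apply/seteqP; split => x /=; rewrite !in_itv /= ltr_pdivlMr // ler_pdivrMr //.
  rewrite !lebesgue_measure_itv /= !lte_fin ltr_pM2r //.
  case: ifPn => ab; last by rewrite mule0.
  by rewrite -!EFinB -EFinM; congr (_%:E); field; rewrite gt_eqF.
rewrite E muleA -EFinM divff ?mul1e //.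
by rewrite gt_eqF.
Qed.
End scale.

Section steps.
Variable R : realType.
Variable phi : R -> R.
Hypothesis phi_nd : forall a b, 0 <= a -> a <= b -> phi a <= phi b.
Hypothesis phi_ge0 : forall a, 0 <= a -> 0 <= phi a.
Variable tau : R.
Hypothesis tau0 : 0 < tau.

Definition tt (i : nat) : R := tau * 2 ^+ i.
Definition ww (i : nat) : R :=
  match i with 0%N => phi (tt 0) | i'.+1 => phi (tt i'.+1) - phi (tt i') end.
Definition qq (n : nat) (x : R) : R := \sum_(0 <= i < n) ww i * (if tt i < x then 1 else 0).

Lemma tt_ge0 i : 0 <= tt i.
Proof. by rewrite /tt mulr_ge0 ?ltW // exprn_ge0. Qed.

Lemma tt_S i : tt i.+1 = 2 * tt i.
Proof. by rewrite /tt exprS; ring. Qed.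

Lemma tt_le i : tt i <= tt i.+1.
Proof. rewrite tt_S; have := tt_ge0 i; lra. Qed.

Lemma ww_ge0 i : 0 <= ww i.
Proof.
case: i => [|i] /=; first exact/phi_ge0/tt_ge0.
by rewrite subr_ge0; apply: phi_nd; [exact: tt_ge0|exact: tt_le].
Qed.

Lemma qq_inv m x : tt m < x -> qq m.+1 x = phi (tt m).
Proof.
elim: m => [|m IH] hx.
  by rewrite /qq big_nat1 hx mulr1.
have hx' : tt m < x by apply: le_lt_trans (tt_le m) hx.
rewrite /qq big_nat_recr //= -/(qq m.+1 x) IH // hx mulr1; ring.
Qed.

Lemma qq_le n x : 0 <= x -> qq n x <= phi x.
Proof.
move=> x0; elim: n => [|n IH].
  by rewrite /qq big_geq // phi_ge0.
case: n IH => [|n] IH.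
  rewrite /qq big_nat1; case: ifPn => h; rewrite ?mulr1 ?mulr0.
    by apply: phi_nd; [exact: tt_ge0|exact: ltW].
  exact: phi_ge0.
rewrite /qq big_nat_recr //= -/(qq n.+1 x).
case: (boolP (tt n.+1 < x)) => h; rewrite ?mulr1 ?mulr0 ?addr0 //.
rewrite qq_inv; last by apply: le_lt_trans (tt_le n) h.
rewrite /ww; have : phi (tt n.+1) <= phi x.
  by apply: phi_nd; [exact: tt_ge0|exact: ltW].
lra.
Qed.

Lemma qq_ge x : tau < x -> exists m, phi (x / 2) <= qq m.+1 x.
Proof.
move=> hx.
have x0 : 0 <= x by rewrite ltW // (lt_trans tau0 hx).
have exn : exists n, x <= tt n.
  exists (Num.bound (x / tau)).
  have := archi_boundP (divr_ge0 x0 (ltW tau0)).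
  set k := Num.bound _ => hk.
  rewrite /tt.
  have h2 : (k%:R : R) <= 2 ^+ k.
    elim: k {hk} => [|k IH]; first by rewrite expr0 ler01.
    rewrite exprS -natr1; have : 1 <= (2 : R) ^+ k by rewrite exprn_ege1 // ler1n.
    lra.
  have : x < tau * k%:R.
    have e : x = tau * (x / tau) by rewrite mulrC divfK // gt_eqF.
    by rewrite {1}e ltr_pM2l.
  have : tau * k%:R <= tau * 2 ^+ k by rewrite ler_pM2l.
  lra.
case: (ex_minnP exn) => n hn hmin.
case: n hn hmin => [|m] hn hmin.
  by move: hn; rewrite /tt expr0 mulr1; lra.
exists m; rewrite qq_inv; last first.
  by rewrite ltNge; apply/negP => /hmin; rewrite ltnn.
apply: phi_nd; first by rewrite divr_ge0.
move: hn; rewrite tt_S; lra.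
Qed.
End steps.

Section integ.
Variables (R : realType) (D : set R) (mD : measurable D).
Local Notation mu := (@lebesgue_measure R).

Definition AA (s : R) (h : R -> R) := D `&` [set y | s < `|h y|].

Lemma mAA s h : measurable_fun D h -> measurable (AA s h).
Proof.
move=> mh.
have mnh : measurable_fun D (fun y => `|h y|).
  by apply: (measurableT_comp (f := @Num.norm _ R)) => //; exact: normr_measurable.
have := mnh mD _ (@measurable_itv R `]s, +oo[).
congr measurable; apply/seteqP; split => y /= [Dy hy]; split => //;
  by move: hy; rewrite /= in_itv /= andbT.
Qed.

Lemma ind_eq s h x : D x -> \1_(AA s h) x = (if s < `|h x| then 1 else 0) :> R.
Proof.
move=> Dx; rewrite indicE; case: ifPn => hs.
  by rewrite mem_set.
by rewrite memNset // => -[_ /= hh]; rewrite hh in hs.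
Qed.

Local Open Scope ereal_scope.

Definition FF phi tau h i x := ((ww phi tau i) * \1_(AA (tt tau i) h) x)%:E.

Lemma int_S phi tau h : measurable_fun D h -> (forall i, (0 <= ww phi tau i)%R) ->
  \int[mu]_(x in D) (\sum_(i <oo) FF phi tau h i x) =
  \sum_(i <oo) (ww phi tau i)%:E * distrib D h (tt tau i).
Proof.
move=> mh hw.
rewrite integral_nneseries //; last 2 first.
- move=> i; apply/measurable_EFinP; apply: measurable_funM => //.
  exact: measurable_indic (mAA _ mh).
- by move=> i x Dx; rewrite lee_fin mulr_ge0 // indicE ler0n.
apply: eq_eseriesr => i _.
rewrite /FF; under eq_integral do rewrite EFinM.
rewrite ge0_integralZl_EFin //; first last.
- by apply/measurable_EFinP; exact: measurable_indic (mAA _ mh).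
rewrite integral_indic //; last exact: mAA.
by rewrite /distrib /AA setIC setIA setIid.
Qed.

Section phisec.
Variable phi : R -> R.
Hypothesis phi_nd : forall a b, (0 <= a)%R -> (a <= b)%R -> (phi a <= phi b)%R.
Hypothesis phi_ge0 : forall a, (0 <= a)%R -> (0 <= phi a)%R.
Variable tau : R.
Hypothesis tau0 : (0 < tau)%R.
Variable h : R -> R.

Lemma S_partial x n : D x ->
  \sum_(0 <= i < n) FF phi tau h i x = (qq phi tau n `|h x|)%:E.
Proof.
move=> Dx; rewrite /qq -sumEFin; apply: eq_bigr => i _.
by rewrite /FF ind_eq.
Qed.

Lemma FF_ge0 i x : 0 <= FF phi tau h i x.
Proof. by rewrite /FF lee_fin mulr_ge0 // ?(ww_ge0 phi_nd phi_ge0) // indicE ler0n. Qed.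

Lemma S_le x : D x -> \sum_(i <oo) FF phi tau h i x <= (phi `|h x|)%:E.
Proof.
move=> Dx; apply: lime_le.
  by apply: is_cvg_nneseries => n _ _; exact: FF_ge0.
by apply: nearW => n; rewrite S_partial // lee_fin; exact: qq_le.
Qed.

Lemma S_ge x : D x ->
  (phi (`|h x| / 2) * \1_(AA tau h) x)%:E <= \sum_(i <oo) FF phi tau h i x.
Proof.
move=> Dx; rewrite ind_eq //; case: ifPn => ht.
  have [m hm] := qq_ge phi_nd tau0 ht.
  rewrite mulr1; apply: (le_trans _ (nneseries_lim_ge m.+1 _)).
    by rewrite S_partial // lee_fin.
  by move=> n _ _; exact: FF_ge0.
rewrite mulr0; apply: (le_trans _ (nneseries_lim_ge 0 _)).
  by rewrite big_geq.
by move=> n _ _; exact: FF_ge0.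
Qed.

End phisec.

End integ.


Section dil.
Variable R : realType.
Local Notation mu := (@lebesgue_measure R).

Lemma distrib_dil (D : set R) (lam : R) (f : R -> R) (t : R) :
  (D = `]0, 1[%classic \/ D = `]0, +oo[%classic) -> (0 < lam < 1) ->
  measurable_fun D f -> 0 <= t ->
  distrib D (dilation D lam f) t = (lam%:E * distrib D f t)%E.
Proof.
move=> HD /andP[l0 l1] mf t0.
have mD : measurable D by case: HD => ->; exact: measurable_itv.
have key : D `&` [set x | t < `|dilation D lam f x|] =
    (fun x : R => x / lam) @^-1` (D `&` [set y | t < `|f y|]).
  apply/seteqP; split => x /=.
  - move=> [Dx]; rewrite /dilation; case: ifPn => [/set_mem Dy|_] //.
    by rewrite normr0 => h; exfalso; move: h; rewrite ltNge t0.
  - move=> [Dy ht]; split; last by rewrite /dilation mem_set.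
    have e : x = lam * (x / lam) by rewrite mulrC divfK // gt_eqF.
    case: HD => HD; rewrite HD /= !in_itv /= in Dy *; move/andP: Dy => [y0 y1];
      rewrite e; apply/andP; split => //.
    + exact: mulr_gt0.
    + nra.
    + exact: mulr_gt0.
rewrite /distrib key leb_scale //.
exact: (mAA mD).
Qed.
End dil.


Section serlim.
Local Open Scope ereal_scope.
Variable R : realType.
Lemma series_le_cvg (a : nat -> nat -> \bar R) (b : nat -> \bar R) (C : \bar R) :
  (forall k N, 0 <= a k N) -> (forall k, a k N @[N --> \oo] --> b k) ->
  (forall N, \sum_(k <oo) a k N <= C) -> \sum_(k <oo) b k <= C.
Proof.
move=> a0 ab aC.
have b0 k : 0 <= b k by apply: (cvge_ge _ (ab k)); apply: nearW.
apply: lime_le; first by apply: is_cvg_nneseries => n _ _; exact: b0.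
apply: nearW => K.
have hc : \sum_(0 <= k < K) a k N @[N --> \oo] --> \sum_(0 <= k < K) b k.
  apply: cvg_nnesum => k _; last exact: ab.
  by apply: nearW => N; exact: a0.
apply: (cvge_le _ hc); apply: nearW => N.
apply: le_trans (aC N).
exact: (nneseries_lim_ge K (fun n _ _ => a0 n N)).
Qed.
End serlim.

Section main.
Local Open Scope ereal_scope.
Variables (R : realType) (M : R -> R) (HM : orlicz_function M) (D : set R).
Hypothesis HD : D = `]0%R, 1%R[%classic \/ D = `]0%R, +oo[%classic.
Variables (f : nat -> R -> R) (lam : nat -> R) (g : R -> R).
Hypothesis mf : forall k, measurable_fun D (f k).
Hypothesis hlam : forall k, (0 < lam k < 1)%R.
Hypothesis mg : measurable_fun D g.
Hypothesis hdist : forall t : R, (0 < t)%R ->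
     distrib D g t = (\sum_(0 <= k <oo) distrib D (dilation D (lam k) (f k)) t).
Local Notation mu := (@lebesgue_measure R).

Let mD : measurable D.
Proof. by case: HD => ->; exact: measurable_itv. Qed.

Let distrib_ge0 h t : 0 <= distrib D h t.
Proof. exact: measure_ge0. Qed.

Lemma mc_lim (h : R -> R) (c : R) : measurable_fun D h -> (0 < c)%R ->
  \int[mu]_(x in D) (M (`|h x| / c) * \1_(AA D (N.+1%:R^-1) h) x)%:E @[N --> \oo]
  --> \int[mu]_(x in D) (M (`|h x| / c))%:E.
Proof.
move=> mh c0.
pose G (N : nat) (x : R) := (M (`|h x| / c) * \1_(AA D (N.+1%:R^-1) h) x)%:E.
have mG N : measurable_fun D (G N).
  apply/measurable_EFinP; apply: measurable_funM.
    by apply/measurable_EFinP; apply: measurable_Mp.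
  exact: measurable_indic (mAA mD _ mh).
have G0 N x : D x -> 0 <= G N x.
  by move=> _; rewrite lee_fin mulr_ge0 // ?indicE ?ler0n //; exact: (M_ge0 HM).
have ndG x : D x -> nondecreasing_seq (G^~ x).
  move=> Dx m n mn; rewrite /G !ind_eq // lee_fin.
  case: ifPn => h1.
    rewrite ifT ?lexx //; apply: le_lt_trans h1.
    by rewrite lef_pV2 ?posrE // ler_nat.
  by rewrite mulr0 mulr_ge0 //; [exact: (M_ge0 HM)|case: ifP].
have lim x : D x -> limn (G^~ x) = (M (`|h x| / c))%:E.
  move=> Dx; apply/cvg_lim => //; apply: cvg_near_cst.
  have [h0|hn0] := eqVneq (h x) 0%R.
    apply: nearW => N; rewrite /G ind_eq // h0 normr0 mul0r.
    case: HM => _ _ ->; rewrite ifF ?mulr0 //.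
    by apply/negbTE; rewrite -leNgt invr_ge0.
  exists (Num.bound (`|h x|^-1)) => // N /= hN.
  rewrite /G ind_eq // ifT ?mulr1 //.
  rewrite invf_plt ?posrE ?normr_gt0 //.
  apply: lt_le_trans (archi_boundP _) _; first by rewrite invr_ge0.
  by rewrite ler_nat; apply: leq_trans hN _.
have -> : \int[mu]_(x in D) (M (`|h x| / c))%:E = \int[mu]_(x in D) limn (G^~ x).
  by apply: eq_integral => x /set_mem Dx; rewrite lim.
exact: cvg_monotone_convergence.
Qed.

Lemma chain (l tau : R) : (0 < l)%R -> (0 < tau)%R ->
  \sum_(k <oo) (lam k)%:E *
     \int[mu]_(x in D) (M (`|f k x| / (2 * l)) * \1_(AA D tau (f k)) x)%:E
  <= \int[mu]_(x in D) (M (`|g x| / l))%:E.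
Proof.
move=> l0 tau0.
pose phi := fun x : R => M (x / l).
have phi_nd : forall a b, (0 <= a)%R -> (a <= b)%R -> (phi a <= phi b)%R.
  move=> a b a0 ab; apply: (M_nd HM); first by rewrite divr_ge0 // ltW.
  by rewrite ler_pM2r // invr_gt0.
have phi_ge0 : forall a, (0 <= a)%R -> (0 <= phi a)%R by move=> a _; exact: (M_ge0 HM).
have hw := ww_ge0 phi_nd phi_ge0 tau0.
pose J h := \sum_(i <oo) (ww phi tau i)%:E * distrib D h (tt tau i).
have stepS h : measurable_fun D h ->
    measurable_fun D (fun x => \sum_(i <oo) FF D phi tau h i x).
  move=> mh.
  apply: (ge0_emeasurable_sum (P := predT)).
    by move=> k x _ _; exact: FF_ge0.
  move=> i _; apply/measurable_EFinP; apply: measurable_funM => //.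
  exact: measurable_indic (mAA mD _ mh).
have step1 : J g <= \int[mu]_(x in D) (M (`|g x| / l))%:E.
  rewrite /J -(int_S mD) //; apply: ge0_le_integral => //.
  - by move=> x _; apply: nneseries_ge0 => n _ _; exact: FF_ge0.
  - exact: stepS.
  - exact: measurable_Mp.
  - by move=> x Dx; exact: (S_le phi_nd phi_ge0 tau0 g Dx).
have tt_gt0 i : (0 < tt tau i)%R by rewrite /tt mulr_gt0 // exprn_gt0.
have step2 : J g = \sum_(k <oo) (lam k)%:E * J (f k).
  rewrite /J.
  transitivity (\sum_(i <oo) \sum_(k <oo)
      (ww phi tau i)%:E * distrib D (dilation D (lam k) (f k)) (tt tau i)).
    apply: eq_eseriesr => i _; rewrite hdist //.
    by rewrite nneseriesZl.
  rewrite (@nneseries_interchange _ _ xpredT xpredT); last first.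
    by move=> i k; apply: mule_ge0; rewrite ?lee_fin.
  apply: eq_eseriesr => k _.
  rewrite -(@nneseriesZl _ _ xpredT); last by move=> i _; apply: mule_ge0; rewrite ?lee_fin.
  apply: eq_eseriesr => i _.
  rewrite distrib_dil //; last exact: ltW.
  by rewrite muleCA.
apply: le_trans step1; rewrite step2.
have lam0 k : (0 <= lam k)%R by case/andP: (hlam k) => /ltW.
apply: lee_nneseries.
  move=> k _ _; apply: mule_ge0; first by rewrite lee_fin.
  apply: integral_ge0 => x _; rewrite lee_fin mulr_ge0 // ?indicE ?ler0n //.
  exact: (M_ge0 HM).
move=> k _; apply: lee_wpmul2l; first by rewrite lee_fin.
rewrite /J -(int_S mD) //.
apply: ge0_le_integral => //.
- move=> x _; rewrite lee_fin mulr_ge0 // ?indicE ?ler0n //; exact: (M_ge0 HM).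
- apply/measurable_EFinP; apply: measurable_funM.
    apply/measurable_EFinP; apply: measurable_Mp => //.
    by rewrite mulr_gt0.
  exact: mf.
  exact: measurable_indic (mAA mD _ (mf k)).
- exact: stepS.
- move=> x Dx; apply: le_trans (S_ge phi_nd phi_ge0 tau0 (f k) Dx).
  by rewrite /phi invfM mulrA.
Qed.

Lemma lim_part l : (0 < l)%R ->
  \sum_(k <oo) (lam k)%:E * \int[mu]_(x in D) (M (`|f k x| / (2 * l)))%:E
  <= \int[mu]_(x in D) (M (`|g x| / l))%:E.
Proof.
move=> l0.
have lam0 k : (0 <= lam k)%R by case/andP: (hlam k) => /ltW.
apply: (series_le_cvg (a := fun k N => (lam k)%:E * \int[mu]_(x in D)
   (M (`|f k x| / (2 * l)) * \1_(AA D (N.+1%:R^-1) (f k)) x)%:E)).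
- move=> k N; apply: mule_ge0; first by rewrite lee_fin.
  apply: integral_ge0 => x _; rewrite lee_fin mulr_ge0 // ?indicE ?ler0n //.
  exact: (M_ge0 HM).
- move=> k; apply: cvgeZl => //; apply: mc_lim => //.
  by rewrite mulr_gt0.
- by move=> N; apply: chain => //; rewrite invr_gt0.
Qed.

Lemma norm_bound (h : R -> R) (c : R) : measurable_fun D h -> (0 < c)%R ->
  orlicz_norm M D h <= c%:E * (1 + \int[mu]_(x in D) (M (`|h x| / c))%:E).
Proof.
move=> mh c0.
have a0 : 0 <= \int[mu]_(x in D) (M (`|h x| / c))%:E.
  by apply: integral_ge0 => x _; rewrite lee_fin; exact: (M_ge0 HM).
move: a0; case E: (\int[mu]_(x in D) (M (`|h x| / c))%:E) => [r| |] // r0.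
  rewrite lee_fin in r0.
  apply: ge_ereal_inf; exists (c * (1 + r))%:E; last by rewrite EFinM.
  exists (c * (1 + r))%R => //; split; first by rewrite mulr_gt0 //; lra.
  have r1 : (0 < 1 + r)%R by lra.
  have H2 : \int[mu]_(x in D) ((1 + r)^-1 * M (`|h x| / c))%:E <= 1.
  {
    rewrite (_ : \int[mu]_(x in D) _ = \int[mu]_(x in D) (((1 + r)^-1)%:E * (M (`|h x| / c))%:E)); last first.
      by apply: eq_integral => x _; rewrite EFinM.
    rewrite ge0_integralZl_EFin //.
    - rewrite E -EFinM lee_fin ler_pdivrMl //; lra.
    - by move=> x _; rewrite lee_fin; exact: (M_ge0 HM).
    - exact: measurable_Mp.
    - by rewrite invr_ge0 ltW.
  }
  apply: le_trans H2.
  apply: ge0_le_integral => //.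
  - by move=> x _; rewrite lee_fin; exact: (M_ge0 HM).
  - by apply: measurable_Mp => //; rewrite mulr_gt0.
  - apply/measurable_EFinP; apply: measurable_funM => //.
    by apply/measurable_EFinP; exact: measurable_Mp.
  - move=> x _; rewrite lee_fin.
    have -> : (`|h x| / (c * (1 + r)) = (1 + r)^-1 * (`|h x| / c))%R.
      by rewrite invfM; ring.
    apply: (M_scale HM); rewrite invr_ge0 ltW //=.
    by rewrite invf_le1 //; lra.
by rewrite addey // mulry gtr0_sg // mul1e leey.
Qed.

Lemma norm_ge0 h : 0 <= orlicz_norm M D h.
Proof.
apply: le_ereal_inf_tmp => _ [l [l0 _] <-].
by rewrite lee_fin ltW.
Qed.

Lemma final_bound : \sum_(0 <= k <oo) (lam k)%:E = 1 ->
  \sum_(0 <= k <oo) ((lam k)%:E * orlicz_norm M D (f k))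
     <= 4%:E * orlicz_norm M D g.
Proof.
move=> hsum.
have lam0 k : (0 <= lam k)%R by case/andP: (hlam k) => /ltW.
set S := \sum_(0 <= k <oo) _.
have key l : (0 < l)%R -> \int[mu]_(x in D) (M (`|g x| / l))%:E <= 1 ->
    S <= (4 * l)%:E.
  move=> l0 hl.
  pose a k := \int[mu]_(x in D) (M (`|f k x| / (2 * l)))%:E.
  have a0 k : 0 <= a k.
    by apply: integral_ge0 => x _; rewrite lee_fin; exact: (M_ge0 HM).
  have l20 : (0 < 2 * l)%R by rewrite mulr_gt0.
  apply: (@le_trans _ _ (\sum_(k <oo)
      ((2 * l * lam k)%:E + (2 * l)%:E * ((lam k)%:E * a k)))).
    apply: lee_nneseries.
      move=> k _ _; apply: mule_ge0; first by rewrite lee_fin.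
      exact: norm_ge0.
    move=> k _.
    apply: le_trans (lee_wpmul2l _ (norm_bound (mf k) l20)) _.
      by rewrite lee_fin.
    rewrite -/(a k) muleCA ge0_muleDr // ge0_muleDr //; last 2 first.
    - by rewrite mule1 lee_fin.
    - by rewrite mule_ge0 // lee_fin.
    by rewrite mule1 -EFinM.
  rewrite nneseriesD //; last 2 first.
  - by move=> k _ _; rewrite lee_fin mulr_ge0 // ltW.
  - move=> k _ _; apply: mule_ge0; first by rewrite lee_fin ltW.
    by apply: mule_ge0; rewrite ?lee_fin.
  have -> : \sum_(k <oo) (2 * l * lam k)%:E = (2 * l)%:E * \sum_(k <oo) (lam k)%:E.
    rewrite -(@nneseriesZl _ _ xpredT) //; last by move=> k _; rewrite lee_fin.
  rewrite nneseriesZl //; last by move=> k _; rewrite mule_ge0 // lee_fin.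
  rewrite hsum mule1.
  have X1 : \sum_(k <oo) (lam k)%:E * a k <= 1 := le_trans (lim_part l0) hl.
  apply: le_trans (leeD2l _ (lee_wpmul2l _ X1)) _; first by rewrite lee_fin ltW.
  by rewrite mule1 -EFinD lee_fin; lra.
have S0 : 0 <= S.
  apply: nneseries_ge0 => k _ _; apply: mule_ge0; first by rewrite lee_fin.
  exact: norm_ge0.
have -> : S = 4%:E * ((4^-1)%:E * S) by rewrite muleA -EFinM mulfV ?mul1e.
apply: lee_wpmul2l => //.
apply: le_ereal_inf_tmp => _ [l [l0 hl] <-].
apply: le_trans (lee_wpmul2l _ (key l l0 hl)) _; first by rewrite lee_fin.
by rewrite -EFinM mulrA mulVf ?mul1r.
Qed.
End main.


Unset Implicit Arguments.

Theorem lemma3p2 (R : realType) (M : R -> R) (D : set R)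
  (f : nat -> R -> R) (lam : nat -> R) (g : R -> R) :
  orlicz_function M ->
  (D = `]0, 1[%classic \/ D = `]0, +oo[%classic) ->
  (forall k, in_orlicz M D (f k)) ->
  (forall k, 0 < lam k < 1) ->
  (\sum_(0 <= k <oo) (lam k)%:E = 1)%E ->
  (* g is the disjoint sum of the dilations sigma_{lam k} (f k) *)
  measurable_fun D g ->
  (forall t : R, 0 < t ->
     distrib D g t = (\sum_(0 <= k <oo) distrib D (dilation D (lam k) (f k)) t)%E) ->
  (\sum_(0 <= k <oo) ((lam k)%:E * orlicz_norm M D (f k))
     <= 4%:E * orlicz_norm M D g)%E.
Proof.
move=> HM HD hf hlam hsum mg hdist.
exact: (final_bound HM HD (fun k => (hf k).1) hlam mg hdist hsum).
Qed.
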